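(* Let $n\ge1$, $q$ a prime power, and let $\mathcal{F}$ be a covering of $[n]$ with no redundant basic set. If the $\mathcal{F}$-combinatorial metric $d_{\mathcal{F}}$ on $\mathbb{F}_q^n$ admits a MacWilliams-type identity, then $\mathcal{F}$ is a $k$-partition of $[n]$ for some $k$.
   Context: For a covering $\mathcal{F}$ of $[n]$ (a family of subsets, called basic sets, whose union is $[n]$) and $x\in\mathbb{F}_q^n$ with $\mathrm{supp}(x)=\{i:x_i\neq0\}$, $\mathrm{wt}_{\mathcal{F}}(x)=\min\{|\mathcal{A}|:\mathcal{A}\subset\mathcal{F},\ \mathrm{supp}(x)\subset\bigcup_{A\in\mathcal{A}}A\}$ and $d_{\mathcal{F}}(x,y)=\mathrm{wt}_{\mathcal{F}}(x-y)$. A basic set $A$ is redundant if $A\subsetneq B$ for some $B\in\mathcal{F}$. $\mathcal{F}$ is a $k$-partition if it is a partition of $[n]$ all of whose blocks have cardinality $k$. For a linear code $\mathcal{C}\subset\mathbb{F}_q^n$, its dual is $\mathcal{C}^\perp=\{u: \sum_i u_ic_i=0\ \forall c\in\mathcal{C}\}$ and its $\mathcal{F}$-weight enumerator is $W_{\mathcal{C}}(x,y)=\sum_{c\in\mathcal{C}}x^{D-\mathrm{wt}_{\mathcal{F}}(c)}y^{\mathrm{wt}_{\mathcal{F}}(c)}$ with $D=\max_{c\in\mathcal{C}}\mathrm{wt}_{\mathcal{F}}(c)$. The metric $d_{\mathcal{F}}$ admits a MacWilliams-type identity if for all linear codes $\mathcal{C}_1,\mathcal{C}_2\subset\mathbb{F}_q^n$,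 $W_{\mathcal{C}_1}=W_{\mathcal{C}_2}$ implies $W_{\mathcal{C}_1^\perp}=W_{\mathcal{C}_2^\perp}$. *)

(* Defs.v *)
From HB Require Import structures.
From mathcomp Require Import all_boot all_order all_algebra all_field.
Set Implicit Arguments. Unset Strict Implicit. Unset Printing Implicit Defensive.
Import GRing.Theory.
Local Open Scope ring_scope.

Section CombMetric.
Variables (F : finFieldType) (n : nat).

Definition supp (x : 'rV[F]_n) : {set 'I_n} := [set i | x 0 i != 0].

Definition covering (fam : {set {set 'I_n}}) : Prop :=
  \bigcup_(A in fam) A = [set: 'I_n].

Definition redundant (fam : {set {set 'I_n}}) (A : {set 'I_n}) : Prop :=
  exists2 B, B \in fam & A \proper B.

(* F-weight: minimal number of basic sets covering the support.
   The default value #|fam| of the min is attained by fam itself when fam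
   is a covering, so this is exactly the minimum for coverings. *)
Definition wtF (fam : {set {set 'I_n}}) (x : 'rV[F]_n) : nat :=
  \big[minn/#|fam|]_(S : {set {set 'I_n}} |
      (S \subset fam) && (supp x \subset \bigcup_(A in S) A)) #|S|.

Definition dF (fam : {set {set 'I_n}}) (x y : 'rV[F]_n) : nat := wtF fam (x - y).

Definition dotv (u c : 'rV[F]_n) : F := \sum_(i < n) u 0 i * c 0 i.

Definition dual (C : {set 'rV[F]_n}) : {set 'rV[F]_n} :=
  [set u | [forall c in C, dotv u c == 0]].

Definition maxwt (fam : {set {set 'I_n}}) (C : {set 'rV[F]_n}) : nat :=
  \max_(c in C) wtF fam c.

(* F-weight enumerator W_C(x,y) = sum_c x^(D - wt c) y^(wt c), as an element
   of Z[x][y] ({poly {poly int}}, inner variable x, outer variable y). *)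
Definition wenum (fam : {set {set 'I_n}}) (C : {set 'rV[F]_n}) : {poly {poly int}} :=
  \sum_(c in C) ('X^(maxwt fam C - wtF fam c))%:P * 'X^(wtF fam c).

Definition code_set (C : {vspace 'rV[F]_n}) : {set 'rV[F]_n} := [set c | c \in C].

Definition admits_MacWilliams (fam : {set {set 'I_n}}) : Prop :=
  forall C1 C2 : {vspace 'rV[F]_n},
    wenum fam (code_set C1) = wenum fam (code_set C2) ->
    wenum fam (dual (code_set C1)) = wenum fam (dual (code_set C2)).

Definition k_partition (fam : {set {set 'I_n}}) (k : nat) : Prop :=
  partition fam [set: 'I_n] /\ forall A, A \in fam -> #|A| = k.

End CombMetric.

(* Main.v *)
Require Import Defs.
From HB Require Import structures.
From mathcomp Require Import all_boot all_order all_algebra all_field all_fingroup.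
Set Implicit Arguments. Unset Strict Implicit. Unset Printing Implicit Defensive.
Import GRing.Theory Num.Theory.


Section Aux.
Local Open Scope ring_scope.

Definition phi (P : {poly {poly int}}) : int :=
  ((map_poly (horner_eval (1 : int)) P)^`()).[1].

Lemma phi_sum (I : finType) (A : {pred I}) (G : I -> {poly {poly int}}) :
  phi (\sum_(i in A) G i) = \sum_(i in A) phi (G i).
Proof.
rewrite /phi rmorph_sum raddf_sum horner_sum //.
Qed.

Lemma phi_term k w : phi (('X^k)%:P * 'X^w) = w%:R.
Proof.
rewrite /phi rmorphM /= map_polyC map_polyXn /= /horner_eval hornerXn expr1n mul1r.
by rewrite derivXn hornerMn hornerXn expr1n.
Qed.

End Aux.


Section Core.
Local Open Scope ring_scope.
Variables (F : finFieldType) (n : nat) (fam : {set {set 'I_n}}).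
Implicit Types (T C : {set 'I_n}) (S : {set {set 'I_n}}).

Definition cw (T : {set 'I_n}) : nat :=
  \big[minn/#|fam|]_(S : {set {set 'I_n}} |
      (S \subset fam) && (T \subset \bigcup_(A in S) A)) #|S|.

Lemma wtE (x : 'rV[F]_n) : wtF fam x = cw (supp x).
Proof. by []. Qed.

Lemma bigminn_le (I : finType) (P : pred I) (G : I -> nat) x j :
  P j -> (\big[minn/x]_(i | P i) G i <= G j)%N.
Proof.
move=> Pj; have : j \in index_enum I by rewrite mem_index_enum.
elim: (index_enum I) => // a r IH; rewrite inE big_cons; case/orP => [/eqP <-|jr].
  by rewrite Pj geq_minl.
case: (P a); last exact: IH.
by rewrite geq_min IH ?orbT.
Qed.

Lemma cw_le T S : S \subset fam -> T \subset \bigcup_(A in S) A -> (cw T <= #|S|)%N.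
Proof. by move=> h1 h2; rewrite /cw; apply: bigminn_le; rewrite h1 h2. Qed.

Lemma cw_ge T m : (m <= #|fam|)%N ->
  (forall S, S \subset fam -> T \subset \bigcup_(A in S) A -> (m <= #|S|)%N) ->
  (m <= cw T)%N.
Proof.
move=> h1 h2; rewrite /cw; elim/big_ind: _ => //.
  by move=> x y hx hy; rewrite leq_min hx hy.
by move=> S /andP[] /h2; apply.
Qed.

Lemma cw_att T : covering fam -> exists S, [/\ S \subset fam,
  T \subset \bigcup_(A in S) A & #|S| = cw T].
Proof.
move=> cov; rewrite /cw; elim/big_ind: _.
- by exists fam; split => //; rewrite cov subsetT.
- move=> x y [S1 [h1 h2 h3]] [S2 [h4 h5 h6]].
  case/orP: (leq_total x y) => h.
    by rewrite (minn_idPl h); exists S1.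
  by rewrite (minn_idPr h); exists S2.
- by move=> S /andP[h1 h2]; exists S.
Qed.

Lemma cw_mono T T' : covering fam -> T \subset T' -> (cw T <= cw T')%N.
Proof.
move=> cov sub; have [S [h1 h2 <-]] := cw_att T' cov.
by apply: cw_le h1 (subset_trans sub h2).
Qed.

Lemma cw0 : cw set0 = 0%N.
Proof. by apply/eqP; rewrite -leqn0 -(cards0 {set 'I_n}); apply: cw_le; rewrite sub0set. Qed.

Lemma cw_block T C : C \in fam -> T != set0 -> T \subset C -> cw T = 1%N.
Proof.
move=> Cf Tn TC; apply/eqP; rewrite eqn_leq; apply/andP; split.
  rewrite -(cards1 C); apply: cw_le; first by rewrite sub1set.
  by rewrite big_set1.
apply: cw_ge; first by rewrite card_gt0; apply/set0Pn; exists C.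
move=> S _ TS; rewrite card_gt0; apply/set0Pn.
case/set0Pn: Tn => t tT; move/subsetP: TS => /(_ t tT) /bigcupP [A AS _].
by exists A.
Qed.

End Core.


Section Vec.
Local Open Scope ring_scope.
Variables (F : finFieldType) (n : nat) (fam : {set {set 'I_n}}).
Implicit Types (D : {set 'rV[F]_n}) (u v w : 'rV[F]_n) (k : F).

Lemma phi_wenum D : phi (wenum fam D) = (\sum_(c in D) wtF fam c)%N%:R.
Proof.
rewrite /wenum phi_sum natr_sum; apply: eq_bigr => c _; exact: phi_term.
Qed.

Lemma wenum_transport D1 D2 (h : 'rV[F]_n -> 'rV[F]_n) :
  {in D1 &, injective h} -> h @: D1 = D2 ->
  {in D1, forall u, wtF fam (h u) = wtF fam u} -> wenum fam D2 = wenum fam D1.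
Proof.
move=> hi <- hw; rewrite /wenum /maxwt !big_imset //.
have -> : (\max_(i in D1) wtF fam (h i) = \max_(c in D1) wtF fam c)%N.
  by apply: eq_bigr => u /hw.
by apply: eq_bigr => u /hw ->.
Qed.

Lemma wenum_mono D1 D2 (h : 'rV[F]_n -> 'rV[F]_n) :
  {in D1 &, injective h} -> h @: D1 = D2 ->
  {in D1, forall u, (wtF fam u <= wtF fam (h u))%N} ->
  wenum fam D1 = wenum fam D2 ->
  {in D1, forall u, wtF fam (h u) = wtF fam u}.
Proof.
move=> hi hD hw hW.
have e : (\sum_(c in D1) wtF fam c = \sum_(u in D1) wtF fam (h u))%N.
  have := congr1 phi hW; rewrite !phi_wenum -hD big_imset //.
  by move/eqP; rewrite eqr_nat => /eqP.
move=> u0 u0D; apply/eqP; rewrite eqn_leq hw // andbT leqNgt; apply/negP => lt.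
move: e; rewrite (bigD1 u0) //= [X in _ = X](bigD1 u0) //= => e.
have : (wtF fam u0 + \sum_(i in D1 | i != u0) wtF fam i <
        wtF fam (h u0) + \sum_(i in D1 | i != u0) wtF fam (h i))%N.
  rewrite -addSn leq_add // leq_sum // => i /andP[iD _]; exact: hw.
by rewrite e ltnn.
Qed.

Lemma dotvD u v w : dotv u (v + w) = dotv u v + dotv u w.
Proof. by rewrite /dotv -big_split; apply: eq_bigr => i _; rewrite mxE mulrDr. Qed.
Lemma dotvZ u k v : dotv u (k *: v) = k * dotv u v.
Proof. by rewrite /dotv mulr_sumr; apply: eq_bigr => i _; rewrite mxE mulrCA. Qed.
Lemma dotvN u v : dotv u (- v) = - dotv u v.
Proof. by rewrite -scaleN1r dotvZ mulN1r. Qed.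
Lemma dotv_delta u (b : 'I_n) : dotv u (delta_mx 0 b) = u 0 b.
Proof.
rewrite /dotv (bigD1 b) //= big1 ?addr0; first by rewrite mxE !eqxx mulr1.
by move=> i ib; rewrite mxE (negbTE ib) andbF mulr0.
Qed.

Lemma dual_line u v : (u \in dual (code_set <[v]>%VS)) = (dotv u v == 0).
Proof.
rewrite inE; apply/forallP/idP => [H|/eqP H c].
  by have := H v; rewrite inE memv_line.
by apply/implyP; rewrite inE => /vlineP [k ->]; rewrite dotvZ H mulr0.
Qed.

Lemma supp_scale k v : k != 0 -> supp (k *: v) = supp v.
Proof. by move=> k0; apply/setP => i; rewrite !inE mxE mulf_eq0 (negbTE k0). Qed.

End Vec.


Section K.
Local Open Scope ring_scope.
Variables (F : finFieldType) (n : nat) (fam : {set {set 'I_n}}).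
Hypothesis cov : covering fam.
Hypothesis MW : admits_MacWilliams F fam.

Lemma deltaE (b k : 'I_n) : (delta_mx 0 b : 'rV[F]_n) 0 k = (k == b)%:R.
Proof. by rewrite mxE eqxx. Qed.

Lemma lemK (a b : 'I_n) C : a != b -> C \in fam -> a \in C -> b \in C ->
  forall T : {set 'I_n}, a \in T -> b \notin T -> cw fam (b |: T) = cw fam T.
Proof.
move=> ab Cf aC bC T aT bT.
pose eb : 'rV[F]_n := delta_mx 0 b.
pose v : 'rV[F]_n := delta_mx 0 a - eb.
have va : v 0 a = 1 by rewrite /v /eb !mxE !eqxx (negbTE ab) /= subr0.
have vb : v 0 b = -1 by rewrite /v /eb !mxE !eqxx eq_sym (negbTE ab) /= sub0r.
have ebb : eb 0 b = 1 by rewrite /eb deltaE eqxx.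
have ebk : forall k, eb 0 k = (k == b)%:R by move=> k; rewrite /eb deltaE.
have vk : forall k, v 0 k = (k == a)%:R - (k == b)%:R by move=> k; rewrite /v /eb !mxE.
have v0 : v != 0 by apply/eqP => /(congr1 (fun w : 'rV[F]_n => w 0 a)); rewrite va mxE; exact/eqP/oner_neq0.
clearbody v eb.
have hW : wenum fam (code_set <[eb]>%VS) = wenum fam (code_set <[v]>%VS).
  symmetry; apply: (@wenum_transport _ _ _ _ _ (fun u => (u 0 b) *: v)).
  - move=> u1 u2; rewrite !inE => /vlineP [k1 ->] /vlineP [k2 ->].
    rewrite !mxE !ebb !mulr1 => /(congr1 (fun w : 'rV[F]_n => w 0 a)); rewrite !mxE va !mulr1.
    by move=> ->.
  - apply/setP => w; apply/imsetP/idP.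
      by case=> u _ ->; rewrite inE memvZ // memv_line.
    rewrite inE => /vlineP [k ->]; exists (k *: eb); first by rewrite inE memvZ // memv_line.
    by rewrite mxE ebb mulr1.
  - move=> u; rewrite inE => /vlineP [k ->]; rewrite mxE ebb mulr1.
    have [->|k0] := eqVneq k 0; first by rewrite !scale0r.
    rewrite !wtE !supp_scale //.
    rewrite (cw_block Cf) //; last first.
    + apply/subsetP => i; rewrite inE vk.
      by case: (i =P a) => [->//|_]; case: (i =P b) => [->//|_]; rewrite subr0 eqxx.
    + by apply/set0Pn; exists a; rewrite inE va oner_eq0.
    rewrite (cw_block Cf) //.
    + by apply/set0Pn; exists b; rewrite inE ebb oner_eq0.
    by apply/subsetP => i; rewrite inE ebk; case: (i =P b) => [->//|_]; rewrite eqxx.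
have hD := MW hW.
pose phi' (u : 'rV[F]_n) := u + (u 0 a) *: eb.
have phia : forall u, phi' u 0 a = u 0 a.
  by move=> u; rewrite /phi' !mxE ebk (negbTE ab) mulr0 addr0.
have phib : forall u, phi' u 0 b = u 0 b + u 0 a.
  by move=> u; rewrite /phi' !mxE ebb mulr1.
have phik : forall u k, k != b -> phi' u 0 k = u 0 k.
  by move=> u k kb; rewrite /phi' !mxE ebk (negbTE kb) mulr0 addr0.
have D1E : forall u, (u \in dual (code_set <[eb]>%VS)) = (u 0 b == 0).
  by move=> u; rewrite dual_line /dotv (bigD1 b) //= big1 ?addr0 ?ebb ?mulr1 //
       => i ib; rewrite ebk (negbTE ib) mulr0.
have D2E : forall u, (u \in dual (code_set <[v]>%VS)) = (u 0 a == u 0 b).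
  move=> u; rewrite dual_line /dotv (bigD1 a) //= (bigD1 b) 1?eq_sym //= big1.
    by rewrite addr0 va vb mulr1 mulrN1 eq_sym subr_eq0.
  by move=> i /andP[ib ia]; rewrite vk (negbTE ia) (negbTE ib) subr0 mulr0.
have key := @wenum_mono _ _ fam _ _ phi' _ _ _ hD.
have phiinj : injective phi'.
  move=> u1 u2 e; have := congr1 (fun w : 'rV[F]_n => w 0 a) e; rewrite /= !phia => ea.
  by move: e; rewrite /phi' ea => /addIr.
have := key (in2W phiinj).
have himg : phi' @: dual (code_set <[eb]>%VS) = dual (code_set <[v]>%VS).
  apply/setP => w; apply/imsetP/idP.
    by case=> u; rewrite D1E => /eqP ub ->; rewrite D2E phia phib ub add0r.
  rewrite D2E => /eqP wab; exists (w - (w 0 a) *: eb).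
    by rewrite D1E !mxE ebb mulr1 wab subrr.
  rewrite /phi' !mxE ebk (negbTE ab) mulr0 subr0 subrK //.
move/(_ himg).
have hmono : {in dual (code_set <[eb]>%VS), forall u,
    (wtF fam u <= wtF fam (phi' u))%N}.
  move=> u; rewrite D1E => /eqP ub; rewrite !wtE; apply: cw_mono => //.
  apply/subsetP => i; rewrite !inE; case: (i =P b) => [->|/eqP ib]; first by rewrite ub eqxx.
  by rewrite phik.
move/(_ hmono).
pose u : 'rV[F]_n := \row_k (k \in T)%:R.
have uk : forall k, u 0 k = (k \in T)%:R by move=> k; rewrite mxE.
move/(_ u); rewrite D1E uk (negbTE bT) eqxx => /(_ isT).
rewrite !wtE.
have -> : supp u = T.
  by apply/setP => i; rewrite inE uk; case: (i \in T); rewrite ?eqxx ?oner_eq0.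
have -> : supp (phi' u) = b |: T; last by [].
apply/setP => i; rewrite !inE; case: (i =P b) => [->|/eqP ib].
  by rewrite phib !uk aT (negbTE bT) add0r oner_eq0.
by rewrite phik // uk; case: (i \in T); rewrite ?eqxx ?oner_eq0.
Qed.

End K.


Section Part.
Variables (n : nat) (fam : {set {set 'I_n}}).
Hypothesis cov : covering fam.
Hypothesis nored : forall A, A \in fam -> ~ redundant fam A.
Hypothesis HK : forall (a b : 'I_n) C, a != b -> C \in fam -> a \in C -> b \in C ->
  forall T : {set 'I_n}, a \in T -> b \notin T -> cw fam (b |: T) = cw fam T.

Lemma blocks_eq A B x : A \in fam -> B \in fam -> x \in A -> x \in B -> A = B.
Proof.
move=> Af Bf xA xB.
have claim : forall m (T : {set 'I_n}), A \subset T -> T \subset A :|: B ->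
    #|T :\: A| = m -> cw fam T = cw fam A.
  elim=> [|m IH] T AT TAB.
    move/eqP; rewrite cards_eq0 setD_eq0 => TA.
    by have -> : T = A by apply/eqP; rewrite eqEsubset TA AT.
  move=> cT; have : (0 < #|T :\: A|)%N by rewrite cT.
  rewrite card_gt0 => /set0Pn [d]; rewrite inE => /andP [dA dT].
  have dB : d \in B.
    by move/subsetP: TAB => /(_ d dT); rewrite inE (negbTE dA).
  have xd : x != d by apply: contraNneq dA => <-.
  have AT' : A \subset T :\ d.
    apply/subsetP => y yA; rewrite !inE (subsetP AT) // andbT.
    by apply: contraNneq dA => <-.
  rewrite -(setD1K dT) (HK xd Bf xB dB); last 2 first.
  - exact: (subsetP AT' x xA).
  - by rewrite !inE eqxx.
  apply: IH => //; first exact: subset_trans (subsetDl T [set d]) TAB.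
  have e1 := cardsD1 d (T :\: A).
  rewrite inE dA dT /= add1n cT in e1.
  case: e1 => ->.
  by apply: eq_card => y; rewrite !inE andbCA.
have e := claim _ (A :|: B) (subsetUl _ _) (subxx _) erefl.
have le1 : (cw fam (A :|: B) <= 1)%N.
  rewrite e -(cards1 A); apply: cw_le; first by rewrite sub1set.
  by rewrite big_set1.
have [S [Sf ABS cS]] := cw_att (A :|: B) cov.
have xS : x \in \bigcup_(D in S) D by apply: (subsetP ABS); rewrite inE xA.
case/bigcupP: xS => C CS xC.
have CS1 : forall D, D \in S -> D = C.
  by move=> D DS; move/card_le1_eqP: (leq_trans (eq_leq cS) le1) => /(_ D C DS CS).
have sub : A :|: B \subset C.
  by apply/subsetP => y /(subsetP ABS) /bigcupP [D DS yD]; rewrite -(CS1 D DS).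
have Cf : C \in fam by apply: (subsetP Sf).
have eqC : forall D, D \in fam -> D \subset C -> D = C.
  move=> D Df DC; apply/eqP; apply/negPn/negP => DnC; apply: (nored Df).
  by exists C => //; rewrite properEneq DnC.
have h1 := eqC A Af (subset_trans (subsetUl A B) sub).
have h2 := eqC B Bf (subset_trans (subsetUr A B) sub).
by rewrite h1 h2.
Qed.

End Part.


Lemma perm_swap n : forall m (A B : {set 'I_n}), [disjoint A & B] -> #|A| = m -> (m <= #|B|)%N ->
  exists (p : {perm 'I_n}) (B' : {set 'I_n}), [/\ B' \subset B, #|B'| = #|A|,
    (forall k, k \in A -> p k \in B'), (forall k, k \in B' -> p k \in A) &
    (forall k, k \notin A -> k \notin B' -> p k = k)].
Proof.
elim=> [|m IH] A B dAB cA cB.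
  exists 1%g, set0; split => //; rewrite ?sub0set ?cards0 //.
  - by move=> k; move/eqP: cA; rewrite cards_eq0 => /eqP ->; rewrite inE.
  - by move=> k; rewrite inE.
  - by move=> k _ _; rewrite perm1.
have : (0 < #|A|)%N by rewrite cA.
rewrite card_gt0 => /set0Pn [a aA].
have : (0 < #|B|)%N by apply: leq_trans cB.
rewrite card_gt0 => /set0Pn [b bB].
have aB : a \notin B by move/disjointFr: dAB => /(_ a aA) ->.
have bA : b \notin A by move/disjointFl: dAB => /(_ b bB) ->.
have dAB' : [disjoint A :\ a & B :\ b].
  by apply: disjointWl (subsetDl _ _) (disjointWr (subsetDl _ _) dAB).
have cA' : #|A :\ a| = m.
  by move: cA; rewrite (cardsD1 a) aA add1n => -[].
have cB' : (m <= #|B :\ b|)%N.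
  by move: cB; rewrite (cardsD1 b B) bB add1n.
have [p [B'' [sB cB'' pA pB pF]]] := IH _ _ dAB' cA' cB'.
have bB'' : b \notin B''.
  by apply/negP => /(subsetP sB); rewrite !inE eqxx.
have aB'' : a \notin B''.
  by apply/negP => /(subsetP sB); rewrite !inE (negbTE aB) andbF.
have ab : a != b by apply: contraNneq bA => <-.
exists (tperm a b * p)%g, (b |: B''); split.
- apply/subsetP => k; rewrite !inE => /orP [/eqP ->//|/(subsetP sB)].
  by rewrite inE => /andP[].
- by rewrite cardsU1 bB'' cB'' (cardsD1 a A) aA.
- move=> k kA; rewrite permM; case: (k =P a) => [->|/eqP ka].
    by rewrite tpermL pF ?setU11 // !inE (negbTE bA) andbF.
  have kb : k != b by apply: contraNneq bA => <-.
  rewrite tpermD 1?eq_sym //; rewrite inE pA ?orbT //.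
  by rewrite !inE ka.
- move=> k; rewrite !inE permM => /orP [/eqP ->|kB''].
    by rewrite tpermR pF // !inE eqxx.
  have kb : k != b by apply: contraNneq bB'' => <-.
  have ka : k != a by apply: contraNneq aB'' => <-.
  rewrite tpermD 1?eq_sym //.
  by move: (pB k kB''); rewrite inE => /andP[].
- move=> k kA; rewrite !inE negb_or => /andP [kb kB''].
  have ka : k != a by apply: contraNneq kA => ->.
  rewrite permM tpermD 1?eq_sym // pF //.
  by rewrite !inE negb_and kA orbT.
Qed.


Section Sz.
Local Open Scope ring_scope.
Variables (F : finFieldType) (n : nat).
Implicit Types (W : {set 'I_n}) (u : 'rV[F]_n).

Definition VW W : {vspace 'rV[F]_n} :=
  lker (linfun (mulmxr (diag_mx (\row_k ((k \notin W)%:R : F))))).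

Lemma memVW W u : (u \in VW W) = (supp u \subset W).
Proof.
rewrite memv_ker lfunE /= mul_mx_diag; apply/eqP/subsetP => [H k|H].
  rewrite inE; apply: contraR => kW.
  have := congr1 (fun M : 'M_(1, n) => M 0 k) H; rewrite !mxE kW mulr1 => ->.
  by rewrite eqxx.
apply/rowP => k; rewrite !mxE; case kW: (k \in W); first by rewrite mulr0.
have : k \notin supp u by apply: contraFN kW => /H.
by rewrite inE negbK => /eqP ->; rewrite mul0r.
Qed.

Lemma supp_delta (b : 'I_n) : supp (delta_mx 0 b : 'rV[F]_n) = [set b].
Proof.
apply/setP => i; rewrite !inE deltaE; case: (i =P b) => _ /=.
  by rewrite oner_eq0.
by rewrite eqxx.
Qed.

Lemma dual_VW W u : (u \in dual (code_set (VW W))) = (supp u \subset ~: W).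
Proof.
rewrite inE; apply/forallP/subsetP => [H k ks|H c].
  rewrite inE; apply/negP => kW; have := H (delta_mx 0 k).
  rewrite !inE memVW supp_delta sub1set kW /= dotv_delta => /eqP uk.
  by move: ks; rewrite inE uk eqxx.
apply/implyP; rewrite inE memVW => cW; apply/eqP; apply: big1 => i _.
case iW: (i \in W).
  have : i \notin supp u by apply/negP => /H; rewrite inE iW.
  by rewrite inE negbK => /eqP ->; rewrite mul0r.
have : i \notin supp c by apply/negP => /(subsetP cW); rewrite iW.
by rewrite inE negbK => /eqP ->; rewrite mulr0.
Qed.

Definition ind W : 'rV[F]_n := \row_k (k \in W)%:R.
Lemma supp_ind W : supp (ind W) = W.
Proof.
by apply/setP => i; rewrite inE mxE; case: (i \in W); rewrite ?eqxx ?oner_eq0.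
Qed.

Lemma img_pre (D1 D2 : {set 'rV[F]_n}) (h : 'rV[F]_n -> 'rV[F]_n) :
  injective h -> (forall u, (h u \in D2) = (u \in D1)) -> h @: D1 = D2.
Proof.
move=> hi pre; have [g hg gh] := injF_bij hi.
apply/setP => w; apply/imsetP/idP => [[u uD ->]|wD]; first by rewrite pre.
by exists (g w); rewrite ?gh // -pre gh.
Qed.

Definition hp (p : {perm 'I_n}) u : 'rV[F]_n := \row_k u 0 (p k).

Lemma supp_hp (p : {perm 'I_n}) u : supp (hp p u) = [set k | p k \in supp u].
Proof. by apply/setP => k; rewrite !inE mxE. Qed.

Lemma hp_inj (p : {perm 'I_n}) : injective (hp p).
Proof.
move=> u1 u2 e; apply/rowP => j; have := congr1 (fun w : 'rV[F]_n => w 0 ((p^-1)%g j)) e.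
by rewrite !mxE permKV.
Qed.

Lemma hp_pre (p : {perm 'I_n}) W1 W2 u : (forall k, (p k \in W1) = (k \in W2)) ->
  (supp (hp p u) \subset W2) = (supp u \subset W1).
Proof.
move=> pW; rewrite supp_hp; apply/subsetP/subsetP => H j.
  move=> js; rewrite -(permKV p j) pW; apply: H; rewrite inE permKV //.
by rewrite inE => /H; rewrite pW.
Qed.

End Sz.


Section Sizes.
Variables (F : finFieldType) (n : nat) (fam : {set {set 'I_n}}).
Hypothesis cov : covering fam.
Hypothesis MW : admits_MacWilliams F fam.
Hypothesis s0 : set0 \notin fam.
Hypothesis disj : forall A B (x : 'I_n), A \in fam -> B \in fam -> x \in A -> x \in B -> A = B.

Lemma size_lt A B : A \in fam -> B \in fam -> (#|A| < #|B|)%N -> False.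
Proof.
move=> Af Bf lt.
have AB : A != B by apply: contraTneq lt => ->; rewrite ltnn.
have dis : forall x, x \in A -> x \notin B.
  by move=> x xA; apply/negP => xB; move/eqP: AB; apply; apply: (disj Af Bf xA xB).
have dAB : [disjoint A & B] by apply/pred0P => x /=; case xA: (x \in A) => //=; rewrite (negbTE (dis x xA)).
have [p [B' [sB cB' pA pB pF]]] := perm_swap dAB erefl (ltnW lt).
have disB' : forall x, x \in A -> x \notin B'.
  by move=> x xA; apply/negP => /(subsetP sB); apply/negP; apply: dis.
have pA' : forall k, (p k \in A) = (k \in B').
  move=> k; case kB': (k \in B'); first exact: pB.
  case kA: (k \in A); first by apply/negP => /disB'; rewrite pA.
  by rewrite pF ?kA ?kB'.
have pAc : forall k, (p k \in ~: A) = (k \in ~: B') by move=> k; rewrite !inE pA'.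
have pB' : forall k, (p k \in B') = (k \in A).
  move=> k; case kA: (k \in A); first exact: pA.
  case kB': (k \in B'); first by apply/negP => pkB'; move: (pB k kB') => /disB'; rewrite pkB'.
  by rewrite pF ?kA ?kB'.
pose h := hp (F:=F) p.
have hW : wenum fam (code_set (VW F A)) = wenum fam (code_set (VW F B')).
  symmetry; apply: (@wenum_transport _ _ _ _ _ h).
  - by move=> x y _ _; apply: hp_inj.
  - by apply: img_pre; first exact: hp_inj; move=> u; rewrite !inE !memVW (hp_pre _ pA').
  move=> u; rewrite inE memVW => uA; rewrite !wtE.
  have [e0|ne0] := eqVneq (supp u) set0.
    have -> : supp (h u) = set0.
      by apply/setP => k; rewrite supp_hp inE e0 !inE.
    by rewrite e0.
  rewrite (cw_block Af ne0 uA) (cw_block Bf) //.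
    case/set0Pn: ne0 => j js; apply/set0Pn; exists ((p^-1)%g j).
    by rewrite supp_hp inE permKV.
  apply: subset_trans sB; by rewrite (hp_pre _ pA').
have hD := MW hW.
have mono : forall T : {set 'I_n}, T \subset ~: A -> (cw fam T <= cw fam [set k | p k \in T])%N.
  move=> T TA; have [S [Sf PS cS]] := cw_att [set k | p k \in T] cov; rewrite -cS.
  have cover_t : forall t, t \in T -> t \notin B' -> exists2 D, D \in S & (D != A) && (t \in D).
    move=> t tT tB'.
    have : (p^-1)%g t \in [set k | p k \in T] by rewrite inE permKV.
    move/(subsetP PS) => /bigcupP [D DS kD].
    have tA : t \notin A by move/(subsetP TA): tT; rewrite inE.
    have kt : (p^-1)%g t = t.
      by apply: (@perm_inj _ p); rewrite permKV pF.
    rewrite kt in kD; exists D; first exact: DS.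
    rewrite kD andbT; apply/eqP => DA; move: tA; rewrite -DA kD; done.
  have cover_B : forall t, t \in T -> t \in B' -> A \in S.
    move=> t tT tB'.
    have : (p^-1)%g t \in [set k | p k \in T] by rewrite inE permKV.
    move/(subsetP PS) => /bigcupP [D DS kD].
    have kA : (p^-1)%g t \in A by rewrite -pB' permKV.
    have DA : D = A by apply: (disj (subsetP Sf D DS) Af kD kA).
    by rewrite -DA.
  case AS: (A \in S).
    have S'f : B |: (S :\ A) \subset fam.
      apply/subUsetP; split; first by rewrite sub1set.
      exact: subset_trans (subsetDl S [set A]) Sf.
    apply: leq_trans (cw_le S'f _) _.
      apply/subsetP => t tT; apply/bigcupP; case tB': (t \in B').
        exists B; [by rewrite !inE eqxx | exact: (subsetP sB t tB')].
      have [D DS /andP [DA tD]] := cover_t t tT (negbT tB').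
      exists D; last exact: tD.
      by rewrite !inE DA DS orbT.
    by rewrite cardsU1 [X in (_ <= X)%N](cardsD1 A S) AS leq_add2r leq_b1.
  apply: cw_le Sf _; apply/subsetP => t tT; apply/bigcupP; case tB': (t \in B').
    by rewrite (cover_B t tT tB') in AS.
  have [D DS /andP [DA tD]] := cover_t t tT (negbT tB').
  exists D; [exact: DS | exact: tD].
have key := @wenum_mono _ _ fam _ _ h _ _ _ hD.
have := key (fun x y _ _ => @hp_inj _ _ p x y).
have himg : h @: dual (code_set (VW F A)) = dual (code_set (VW F B')).
  apply: img_pre; first exact: hp_inj.
  by move=> u; rewrite !dual_VW (hp_pre _ pAc).
move/(_ himg).
have hmono : {in dual (code_set (VW F A)), forall u,
    (wtF fam u <= wtF fam (h u))%N}.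
  move=> u; rewrite dual_VW => uA; rewrite !wtE supp_hp; exact: mono.
move/(_ hmono).
have : (0 < #|A|)%N by rewrite card_gt0; apply: contraNneq s0 => <-.
rewrite card_gt0 => /set0Pn [a1 a1A].
have : B :\: B' != set0.
  apply/negP; rewrite setD_eq0 => BB'; move: (subset_leq_card BB').
  by rewrite cB' leqNgt lt.
case/set0Pn => b2; rewrite inE => /andP [b2B' b2B].
have b1B' := pA a1 a1A.
pose T0 := [set p a1; b2].
have T0B : T0 \subset B.
  apply/subsetP => t; rewrite !inE => /orP [/eqP ->|/eqP ->]; last exact: b2B.
  exact: (subsetP sB _ b1B').
move/(_ (ind F T0)).
rewrite dual_VW supp_ind.
have -> : T0 \subset ~: A.
  by apply/subsetP => t /(subsetP T0B) tB; rewrite inE; apply: contraL tB; apply: dis.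
move/(_ isT); rewrite !wtE supp_ind supp_hp.
have T0n : T0 != set0 by apply/set0Pn; exists b2; rewrite !inE eqxx orbT.
rewrite (cw_block Bf T0n T0B).
move=> e; suff : (2 <= cw fam [set k | p k \in supp (ind F T0)])%N by rewrite e.
rewrite supp_ind; apply: cw_ge.
  apply: leq_trans (subset_leq_card (_ : [set A; B] \subset fam)).
    by rewrite cards2 AB.
  by apply/subsetP => D; rewrite !inE => /orP [/eqP ->|/eqP ->].
move=> S Sf PS.
have a1P : a1 \in [set k | p k \in T0] by rewrite !inE eqxx.
have b2A : b2 \notin A by apply/negP => /dis; rewrite b2B.
have b2P : b2 \in [set k | p k \in T0].
  by rewrite inE (pF b2 b2A b2B') !inE eqxx orbT.
move/(subsetP PS): a1P => /bigcupP [D1 D1S a1D1].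
move/(subsetP PS): b2P => /bigcupP [D2 D2S b2D2].
have e1 : D1 = A := disj (subsetP Sf D1 D1S) Af a1D1 a1A.
have e2 : D2 = B := disj (subsetP Sf D2 D2S) Bf b2D2 b2B.
apply: leq_trans (subset_leq_card (_ : [set A; B] \subset S)).
  by rewrite cards2 AB.
by apply/subsetP => D; rewrite !inE => /orP [/eqP ->|/eqP ->]; rewrite -?e1 -?e2.
Qed.

End Sizes.


Theorem proposition4 (F : finFieldType) (n : nat) (fam : {set {set 'I_n}}) :
  (1 <= n)%N ->
  covering fam ->
  (forall A, A \in fam -> ~ redundant fam A) ->
  admits_MacWilliams F fam ->
  exists k : nat, k_partition fam k.
Proof.
move=> hn cov nored MW.
pose i0 : 'I_n := Ordinal hn.
have : i0 \in \bigcup_(A in fam) A by rewrite cov inE.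
case/bigcupP => C0 C0f i0C0.
have s0 : set0 \notin fam.
  apply/negP => s0f; apply: (nored _ s0f); exists C0 => //.
  rewrite properEneq sub0set andbT; apply/eqP => e.
  by move: i0C0; rewrite -e inE.
have HK := lemK cov MW.
have disj := blocks_eq cov nored HK.
exists #|C0|; split.
  apply/and3P; split; last exact: s0.
    by apply/eqP; exact: cov.
  apply/trivIsetP => A B Af Bf AB; rewrite -setI_eq0; apply/eqP/setP => x; rewrite !inE; apply/negP => /andP [xA xB].
  by move/eqP: AB; apply; apply: disj Af Bf xA xB.
move=> A Af; case: (ltngtP #|A| #|C0|) => [lt|lt|]; last by [].
  by case: (size_lt cov MW s0 disj Af C0f lt).
by case: (size_lt cov MW s0 disj C0f Af lt).
Qed.
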